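(* Let $A$ be a set of regular cardinals with $\operatorname{ot}(A)<\mu:=\sup(A)$ such that every $a\in A$ carries a Jónsson algebra, and suppose $\mu^+\in\operatorname{spec}^*(A)$. Then $\mu^+$ carries a Jónsson algebra.
   Context: An algebra is a structure $\langle X,f_n\rangle_{n<\omega}$ where each $f_n$ is a finitary function from $X$ to $X$; a Jónsson algebra is an algebra with no proper subalgebra of the same cardinality; a cardinal $\lambda$ carries a Jónsson algebra if there is a Jónsson algebra of cardinality $\lambda$. For a set $A$ of regular cardinals, $\prod A$ is the set of functions on $A$ with $f(a)\in a$; for $\mathcal{G}\subseteq\prod A$, $\operatorname{ub}(\mathcal{G})$ is the set of $a\in A$ with $\{f(a):f\in\mathcal{G}\}$ unbounded in $a$. $\operatorname{spec}^*(A)$ is the set of regular $\lambda$ such that there is $\mathcal{F}\subseteq\prod A$ of size $\lambda$ such that for every $\mathcal{F}_0\subseteq\mathcal{F}$ of size $\lambda$, $\operatorname{ub}(\mathcal{F}_0)$ is unbounded in $\sup(A)$. $\operatorname{ot}(A)$ is the order type of $A$. *)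

(* Defs.v *)
From mathcomp Require Import all_boot.
From mathcomp Require Import boolp classical_sets cardinality.
Set Implicit Arguments. Unset Strict Implicit. Unset Printing Implicit Defensive.
Local Open Scope classical_set_scope.

(* Cardinals and ordinals are modelled inside an arbitrary strict
   well-order W: a cardinal is an initial element of W, identified with
   the set of its predecessors. All notions below only depend on the
   order type of initial segments, hence agree with the usual ones. *)
Record WellOrder := {
  wcar :> Type;
  wlt : wcar -> wcar -> Prop;
  wlt_irrefl : forall x, ~ wlt x x;
  wlt_trans : forall x y z, wlt x y -> wlt y z -> wlt x z;
  wlt_total : forall x y, wlt x y \/ x = y \/ wlt y x;
  wlt_wf : well_founded wlt }.

Section Defs.
Variable W : WellOrder.
Local Notation "x <w y" := (wlt x y) (at level 70).
Definition wle (x y : W) := x <w y \/ x = y.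
Local Notation "x <=w y" := (wle x y) (at level 70).

Definition seg (x : W) : set W := [set y | y <w x].

Definition is_cardinal (x : W) : Prop :=
  forall y, y <w x -> ~ card_eq (seg y) (seg x).

Definition is_regular (x : W) : Prop :=
  is_cardinal x /\ ~ finite_set (seg x) /\
  forall C : set W, C `<=` seg x ->
    (forall y, y <w x -> exists2 c, C c & y <=w c) -> card_eq C (seg x).

Definition is_sup (A : set W) (mu : W) : Prop :=
  (forall a, A a -> a <=w mu) /\
  (forall b, (forall a, A a -> a <=w b) -> mu <=w b).

Definition ot_lt (A : set W) (mu : W) : Prop :=
  exists2 beta, beta <w mu &
    exists h : W -> W,
      (forall a, A a -> h a <w beta) /\
      (forall g, g <w beta -> exists2 a, A a & h a = g) /\
      (forall a b, A a -> A b -> a <w b -> h a <w h b).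

Definition is_succ_card (mu mup : W) : Prop :=
  is_cardinal mup /\ mu <w mup /\
  (forall c, is_cardinal c -> mu <w c -> mup <=w c).

(* elements of prod A: functions with f a < a for a in A, and
   (canonical representative) f x = x off A *)
Definition in_prod (A : set W) (f : W -> W) : Prop :=
  (forall a, A a -> f a <w a) /\ (forall x, ~ A x -> f x = x).

Definition ub (A : set W) (G : set (W -> W)) : set W :=
  [set a | A a /\ forall g, g <w a -> exists2 f, G f & g <=w f a].

Definition in_spec_star (A : set W) (lambda : W) : Prop :=
  is_regular lambda /\
  exists F : set (W -> W),
    (forall f, F f -> in_prod A f) /\ card_eq F (seg lambda) /\
    forall F0 : set (W -> W), F0 `<=` F -> card_eq F0 (seg lambda) ->
      forall mu, is_sup A mu ->
        forall b, b <w mu -> exists2 a, ub A F0 a & b <w a.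
End Defs.

Definition jonsson_algebra (X : Type) (k : nat -> nat)
    (f : forall n, ('I_(k n) -> X) -> X) : Prop :=
  forall Y : set X,
    (forall n (v : 'I_(k n) -> X), (forall i, Y (v i)) -> Y (f n v)) ->
    card_eq Y [set: X] -> Y = [set: X].

Definition carries_jonsson_type (X : Type) : Prop :=
  exists (k : nat -> nat) (f : forall n, ('I_(k n) -> X) -> X),
    jonsson_algebra f.

Definition carries_jonsson (W : WellOrder) (lambda : W) : Prop :=
  carries_jonsson_type {x : W | wlt x lambda}.

(* Main.v *)
Require Import Defs.
From mathcomp Require Import all_boot.
From mathcomp Require Import boolp classical_sets cardinality.
Set Implicit Arguments. Unset Strict Implicit. Unset Printing Implicit Defensive.
Local Open Scope classical_set_scope.
Local Open Scope card_scope.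

Lemma card_eq_fn {T U} (A : set T) (B : set U) (d : U) : A #= B ->
  exists f : T -> U, (forall x, A x -> B (f x)) /\
    (forall x y, A x -> A y -> f x = f y -> x = y) /\
    (forall y, B y -> exists2 x, A x & f x = y).
Proof.
move/card_bijP => [g [g' gK g'K]].
pose f x := match pselect (A x) with left h => val (g (SigSub (mem_set h))) | right _ => d end.
exists f; split; [|split].
- move=> x Ax; rewrite /f; case: pselect => // h.
  by have := valP (g (SigSub (mem_set h))); rewrite inE.
- move=> x y Ax Ay; rewrite /f; case: pselect => // hx; case: pselect => // hy.
  move/val_inj/(can_inj gK) => /(congr1 val) //.
- move=> y By; exists (val (g' (SigSub (mem_set By)))).
    by have := valP (g' (SigSub (mem_set By))); rewrite inE.
  rewrite /f; case: pselect => // h; last first.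
    by exfalso; apply: h; have := valP (g' (SigSub (mem_set By))); rewrite inE.
  have -> : SigSub (mem_set h) = g' (SigSub (mem_set By)) by apply: val_inj.
  by rewrite g'K.
Qed.

Lemma inj_le {T U} (A : set T) (B : set U) (f : T -> U) :
  (forall x, A x -> B (f x)) ->
  (forall x y, A x -> A y -> f x = f y -> x = y) -> A #<= B.
Proof.
move=> fAB finj.
have h : f @` A #= A.
  apply: inj_card_eq => x y; rewrite !inE => Ax Ay; exact: finj.
apply: (@card_le_trans _ _ _ (f @` A)).
  by move: (card_esym h); rewrite card_eq_le => /andP[].
apply: subset_card_le => _ [x Ax <-]; exact: fAB.
Qed.

Section WO.
Variable W : WellOrder.
Local Notation "x <w y" := (wlt x y) (at level 70).
Local Notation "x <=w y" := (wle x y) (at level 70).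

Lemma wlt_asym (x y : W) : x <w y -> y <w x -> False.
Proof. move=> h1 h2; exact: (wlt_irrefl (wlt_trans h1 h2)). Qed.

Lemma wle_lt_trans (x y z : W) : x <=w y -> y <w z -> x <w z.
Proof. by case=> [h|->] // h'; apply: wlt_trans h h'. Qed.

Lemma wlt_le_trans (x y z : W) : x <w y -> y <=w z -> x <w z.
Proof. by move=> h [h'|<-] //; apply: wlt_trans h h'. Qed.

Lemma wle_trans (x y z : W) : x <=w y -> y <=w z -> x <=w z.
Proof.
case=> [h|->] // [h'|<-]; [left; exact: wlt_trans h h'|by left].
Qed.

Lemma wle_refl (x : W) : x <=w x. Proof. by right. Qed.

Lemma wnle (x y : W) : ~ (x <=w y) -> y <w x.
Proof.
move=> h; case: (wlt_total x y) => [h'|[e|//]]; exfalso; apply: h; [by left|by right].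
Qed.

Lemma wnlt (x y : W) : ~ (x <w y) -> y <=w x.
Proof.
move=> h; case: (wlt_total x y) => [//|[e|h']]; [by right|by left].
Qed.

Lemma wle_nlt (x y : W) : x <=w y -> ~ y <w x.
Proof. move=> h h'; exact: (wlt_irrefl (wle_lt_trans h h')). Qed.

Lemma least_ex (P : W -> Prop) : (exists x, P x) ->
  exists x, P x /\ forall y, y <w x -> ~ P y.
Proof.
move=> [x Px]; apply: contrapT => hn.
elim/(well_founded_ind (@wlt_wf W)): x Px => x IH Px.
apply: hn; exists x; split => // y yx Py; exact: IH yx Py.
Qed.

Lemma seg_sub (x y : W) : x <=w y -> seg x `<=` seg y.
Proof. move=> h z; rewrite /seg /= => zx; exact: wlt_le_trans zx h. Qed.

End WO.

Lemma sig_irr (W : Type) (P : W -> Prop) (s t : {x | P x}) : proj1_sig s = proj1_sig t -> s = t.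
Proof. case: s => x Hx; case: t => y Hy /= e; subst y; congr exist; exact: Prop_irrelevance. Qed.

Lemma jonsson_W (W : WellOrder) (a : W) : carries_jonsson a ->
  exists (k : nat -> nat) (f : forall n, ('I_(k n) -> W) -> W),
   (forall n v, wle (f n v) a) /\ (forall n v, (forall i, wlt (v i) a) -> wlt (f n v) a) /\
   (forall Z : set W, Z `<=` seg a -> (forall n v, (forall i, Z (v i)) -> Z (f n v)) ->
      Z #= seg a -> seg a `<=` Z).
Proof.
move=> [k [f Jf]].
pose g n (v : 'I_(k n) -> W) := match pselect (forall i, wlt (v i) a) with
  left H => proj1_sig (f n (fun i => exist _ (v i) (H i))) | right _ => a end.
exists k, g; split; [|split].
- move=> n v; rewrite /g; case: pselect => H; last by right.
  by left; case: (f n _).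
- move=> n v H; rewrite /g; case: pselect => H'; last by exfalso.
  by case: (f n _).
move=> Z Zsub Zcl Zc.
pose Y : set {x | wlt x a} := fun s => Z (proj1_sig s).
pose pv := (fun s : {x | wlt x a} => proj1_sig s).
have Yimg : pv @` Y = Z.
  apply/seteqP; split; first by move=> _ [s Ys <-].
  move=> z Zz; exists (exist _ z (Zsub z Zz)) => //.
have Timg : pv @` [set: {x | wlt x a}] = seg a.
  apply/seteqP; split; first by move=> _ [[s hs] _ <-].
  move=> z za; by exists (exist _ z za).
have vinj : forall B : set {x | wlt x a}, {in B &, injective pv}.
  move=> B x y _ _; exact: sig_irr.
have YT : Y = [set: {x | wlt x a}].
  move: (Jf Y); apply.
    move=> n v Yv; rewrite /Y.
    have := Zcl n (fun i => proj1_sig (v i)) Yv.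
    rewrite /g; case: pselect => H; last first.
      by exfalso; apply: H => i; by case: (v i).
    congr (Z (proj1_sig (f n _))); apply: funext => i; exact: sig_irr.
  apply: card_eq_trans (card_esym (inj_card_eq (vinj Y))) _.
  rewrite Yimg; apply: card_eq_trans Zc _.
  by rewrite -Timg; apply: inj_card_eq.
move=> z za.
have : Y (exist _ z za) by rewrite YT.
by [].
Qed.

Section Terms.
Variable (T : Type) (op : nat -> seq T -> T).
Notation tree := (GenTree.tree nat).

Section TI.
Variable P : tree -> Prop.
Lemma allP_nil : forall u : tree, u \in [::] -> P u.
Proof. by move=> u; rewrite in_nil. Qed.
Lemma allP_cons t l : P t -> (forall u, u \in l -> P u) -> forall u, u \in t :: l -> P u.
Proof. by move=> Pt Pl u; rewrite in_cons => /orP[/eqP->|/Pl]. Qed.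
Definition tree_ind' (HL : forall i, P (GenTree.Leaf i))
  (HN : forall n ts, (forall t, t \in ts -> P t) -> P (GenTree.Node n ts)) :=
  fix IH (t : tree) : P t := match t with
   | GenTree.Leaf i => HL i
   | GenTree.Node n ts => HN n ts ((fix aux (l : seq tree) : forall u, u \in l -> P u :=
        match l with [::] => allP_nil | t' :: l' => allP_cons (IH t') (aux l') end) ts)
   end.
End TI.

Fixpoint tev (rho : nat -> T) (t : tree) : T :=
  match t with GenTree.Leaf i => rho i | GenTree.Node n ts => op n (map (tev rho) ts) end.
Fixpoint ren (g : nat -> nat) (t : tree) : tree :=
  match t with GenTree.Leaf i => GenTree.Leaf (g i) | GenTree.Node n ts => GenTree.Node n (map (ren g) ts) end.
Fixpoint vb (t : tree) : nat :=
  match t with GenTree.Leaf i => i.+1 | GenTree.Node _ ts => foldr maxn 0 (map vb ts) end.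

Lemma tev_ren rho g t : tev rho (ren g t) = tev (fun j => rho (g j)) t.
Proof.
elim/tree_ind': t => [i|n ts IH] //=; congr (op n _).
rewrite -map_comp; apply/eq_in_map => u /= uts; exact: IH.
Qed.

Lemma vb_in u ts : u \in ts -> vb u <= foldr maxn 0 (map vb ts).
Proof.
elim: ts => [|t ts IH] //=; rewrite in_cons => /orP[/eqP->|/IH h].
  exact: leq_maxl.
by rewrite leq_max h orbT.
Qed.

Lemma tev_agree rho rho' t : (forall j, j < vb t -> rho j = rho' j) -> tev rho t = tev rho' t.
Proof.
elim/tree_ind': t => [i|n ts IH] /= H; first exact: H.
congr (op n _); apply/eq_in_map => u uts; apply: IH => // j ju.
apply: H; exact: leq_trans ju (vb_in uts).
Qed.
End Terms.

Section Main.
Variables (W : WellOrder) (A : set W) (mu mup : W).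
Local Notation "x <w y" := (wlt x y) (at level 70).
Local Notation "x <=w y" := (wle x y) (at level 70).
Variables (beta : W) (h : W -> W) (F : set (W -> W)) (psi : W -> W -> W)
  (e : W -> W -> W) (a0 : W) (kk : W -> nat -> nat)
  (ffW : forall a n, ('I_(kk a n) -> W) -> W).
Arguments ffW : clear implicits.
Hypothesis HA : forall a, A a -> is_regular a.
Hypothesis Hsup : is_sup A mu.
Hypothesis Hsucc : is_succ_card mu mup.
Hypothesis Hbeta : beta <w mu.
Hypothesis Hh1 : forall a, A a -> h a <w beta.
Hypothesis Hh2 : forall g, g <w beta -> exists2 a, A a & h a = g.
Hypothesis Hh3 : forall a b, A a -> A b -> a <w b -> h a <w h b.
Hypothesis HFprod : forall f, F f -> in_prod A f.
Hypothesis HFspec : forall F0 : set (W -> W), F0 `<=` F -> F0 #= seg mup ->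
  forall b, b <w mu -> exists2 a, ub A F0 a & b <w a.
Hypothesis Hpsi1 : forall x, x <w mup -> F (psi x).
Hypothesis Hpsi2 : forall x y, x <w mup -> y <w mup -> psi x = psi y -> x = y.
Hypothesis He1 : forall g, mu <=w g -> g <w mup -> forall x, x <w mu -> e g x <w g.
Hypothesis He2 : forall g, mu <=w g -> g <w mup -> forall y, y <w g -> exists2 x, x <w mu & e g x = y.
Hypothesis Ha0 : A a0.
Hypothesis Ha0b : beta <w a0.
Hypothesis Hff1 : forall a n v, A a -> ffW a n v <=w a.
Hypothesis Hff2 : forall a n v, A a -> (forall i, v i <w a) -> ffW a n v <w a.
Hypothesis Hff3 : forall a, A a -> forall Z : set W, Z `<=` seg a ->
  (forall n v, (forall i, Z (v i)) -> Z (ffW a n v)) -> Z #= seg a -> seg a `<=` Z.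

Lemma mu_mup : mu <w mup. Proof. by case: Hsucc => _ []. Qed.

Lemma A_le_mu a : A a -> a <=w mu. Proof. by case: Hsup => hs _; apply: hs. Qed.

Lemma A_lt_mup a : A a -> a <w mup.
Proof. move=> Aa; exact: wle_lt_trans (A_le_mu Aa) mu_mup. Qed.

Lemma seg_card g : mu <=w g -> g <w mup -> seg g #= seg mu.
Proof.
move=> mug gmup.
have [d [Pd dmin]] := @least_ex W (fun d => seg d #= seg g) (ex_intro _ g (card_eqxx _)).
have dcard : is_cardinal d.
  by move=> y yd e'; apply: (dmin y yd); apply: card_eq_trans e' Pd.
have dle : d <=w g by apply: wnlt => hh; exact: (dmin g hh (card_eqxx _)).
have dmu : d <=w mu.
  apply: wnlt => mud; case: Hsucc => _ [_ Hm].
  have := Hm d dcard mud => hh.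
  exact: (wlt_irrefl (wle_lt_trans (wle_trans hh dle) gmup)).
rewrite card_eq_le; apply/andP; split.
  apply: (@card_le_trans _ _ _ (seg d)).
    by move: (card_esym Pd); rewrite card_eq_le => /andP[].
  exact: subset_card_le (seg_sub dmu).
exact: subset_card_le (seg_sub mug).
Qed.

Lemma small_seg y : y <w mup -> seg y #<= seg mu.
Proof.
move=> ymup; case: (wlt_total y mu) => [hh|hh].
  by apply: subset_card_le; apply: seg_sub; left.
have muy : mu <=w y by case: hh => [->|hh]; [right|left].
by move: (seg_card muy ymup); rewrite card_eq_le => /andP[].
Qed.

Lemma mup_not_le : ~ (seg mup #<= seg mu).
Proof.
move=> hh; case: Hsucc => [hc _]; apply: (hc mu mu_mup).
rewrite card_eq_le hh andbT; apply: subset_card_le; apply: seg_sub; left; exact: mu_mup.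
Qed.

Lemma h_inj a b : A a -> A b -> h a = h b -> a = b.
Proof.
move=> Aa Ab hab; case: (wlt_total a b) => [lt|[//|lt]]; exfalso.
  by have := Hh3 Aa Ab lt; rewrite hab => /wlt_irrefl.
by have := Hh3 Ab Aa lt; rewrite hab => /wlt_irrefl.
Qed.

Lemma small (g : W -> W) : exists2 y, y <w a0 & forall a', A a' -> g a' <w a0 -> g a' <w y.
Proof.
apply: contrapT => hn.
pose C := fun c => (exists2 a', A a' & g a' = c) /\ c <w a0.
have Ccof : forall y, y <w a0 -> exists2 c, C c & y <=w c.
  move=> y ya; apply: contrapT => hc; apply: hn; exists y => // a' Aa' ga'.
  apply: wnle => hle; apply: hc; exists (g a') => //; split => //; by exists a'.
have Cc : C #= seg a0 by case: (HA Ha0) => _ [_ hr]; apply: hr => // c [].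
have CA : C #<= A.
  apply: (@card_le_trans _ _ _ (g @` A)); last exact: card_image_le.
  by apply: subset_card_le => c [[a' Aa' <-] _]; exists a'.
have Ab : A #<= seg beta.
  apply: (inj_le (f := h)) => [a Aa|]; first exact: Hh1.
  move=> x y Ax Ay; exact: h_inj.
case: (HA Ha0) => hcard _; apply: (hcard beta Ha0b).
rewrite card_eq_le; apply/andP; split.
  by apply: subset_card_le; apply: seg_sub; left.
apply: (@card_le_trans _ _ _ C); first by move: (card_esym Cc); rewrite card_eq_le => /andP[].
exact: card_le_trans CA Ab.
Qed.

Definition K := (nat * nat * nat + GenTree.tree nat * nat)%type.
Definition arity (k : K) : nat :=
  match k with
  | inl (tag, n, m) => match tag with 0 => 0 | 1 => 1 | 2 => 2 | 3 => 2 | _ => m.+1 end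
  | inr (t, l) => l end.
Definition mask (l : nat) (x : nat -> W) (j : nat) : W := if j < l then x j else mu.

Definition Hinv (i : W) : W :=
  match pselect (exists2 a, A a & h a = i) with
  | left H => let: exist2 a _ _ := cid2 H in a | right _ => i end.
Definition Fval (al x : W) : W :=
  match pselect (A x /\ al <w mup) with left _ => psi al x | right _ => x end.
Definition Ev (g x : W) : W :=
  match pselect (mu <=w g /\ g <w mup /\ x <w mu) with left _ => e g x | right _ => x end.
Definition Jons (n : nat) (x : nat -> W) : W :=
  match pselect (A (x 0)) with
  | left _ => ffW (x 0) n (fun i => x (nat_of_ord i).+1) | right _ => x 0 end.
Definition opT (a : W) (n : nat) (s : seq W) : W := ffW a n (fun i => nth a s i).
Definition evT (a : W) (rho : nat -> W) (t : GenTree.tree nat) : W := tev (opT a) rho t.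
Definition Hb (t : GenTree.tree nat) (x : nat -> W) : W :=
  match pselect (exists2 y, y <w a0 & forall a', A a' ->
     evT a' (fun j => psi (x j) a') t <w a0 -> evT a' (fun j => psi (x j) a') t <w y) with
  | left H => let: exist2 y _ _ := cid2 H in y | right _ => a0 end.

Definition gN0 (k : K) (x : nat -> W) : W :=
  match k with
  | inl (tag, n, m) => match tag with
     | 0 => a0 | 1 => Hinv (x 0) | 2 => Fval (x 0) (x 1) | 3 => Ev (x 0) (x 1)
     | _ => Jons n x end
  | inr (t, l) => Hb t x end.
Definition gN (k : K) (x : nat -> W) : W := gN0 k (mask (arity k) x).

Lemma gN_ext k x x' : (forall j, j < arity k -> x j = x' j) -> gN k x = gN k x'.
Proof.
move=> hx; rewrite /gN; congr gN0; apply: funext => j; rewrite /mask.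
by case: ifP => // /hx.
Qed.

Lemma in_prod_lt f a : F f -> A a -> f a <w a.
Proof. by move=> /HFprod [hp _]; apply: hp. Qed.

Lemma gN_lt k x : (forall j, j < arity k -> x j <w mup) -> gN k x <w mup.
Proof.
have a0m := A_lt_mup Ha0.
move=> hx; rewrite /gN.
have hm : forall j, j < arity k -> mask (arity k) x j <w mup.
  by move=> j hj; rewrite /mask hj; apply: hx.
clear hx; move: hm; move: (mask (arity k) x) => y; case: k => [[[tag n] m]|[t l]] /= hm.
- case: tag hm => [|[|[|[|tag]]]] /= hm.
  + exact: a0m.
  + rewrite /Hinv; case: pselect => [H|_]; last exact: hm.
    by case: (cid2 H) => a Aa _; apply: A_lt_mup.
  + rewrite /Fval; case: pselect => [[Ax lt]|_]; last exact: hm.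
    apply: wlt_trans (hm 1 isT); exact: in_prod_lt (Hpsi1 lt) Ax.
  + rewrite /Ev; case: pselect => [[h1 [h2 h3]]|_]; last exact: hm.
    exact: wlt_trans (He1 h1 h2 h3) h2.
  + rewrite /Jons; case: pselect => [Ay|_]; last exact: hm.
    apply: (@wle_lt_trans _ _ (y 0)); [exact: Hff1 Ay|exact: A_lt_mup].
- rewrite /Hb; case: pselect => [H|_]; last exact: a0m.
  by case: (cid2 H) => z z0 _; apply: wlt_trans z0 a0m.
Qed.

Definition X := {x : W | x <w mup}.
Definition dec (p : nat) : K := odflt (inl (0, 0, 0)) (unpickle p).
Definition kf (p : nat) : nat := arity (dec p).
Definition xv (m : nat) (v : 'I_m -> X) (j : nat) : W :=
  match insub j with Some i => proj1_sig (v i) | None => mu end.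
Lemma xv_lt p (v : 'I_(kf p) -> X) : gN (dec p) (xv v) <w mup.
Proof.
apply: gN_lt => j hj; rewrite /xv; case: insubP => [i _ _|]; first by case: (v i).
by rewrite hj.
Qed.
Definition fX (p : nat) (v : 'I_(kf p) -> X) : X := exist _ (gN (dec p) (xv v)) (xv_lt v).

Section Closure.
Variable Y : set X.
Hypothesis Ycl : forall p (v : 'I_(kf p) -> X), (forall i, Y (v i)) -> Y (fX v).
Hypothesis Yc : Y #= [set: X].

Definition M (w : W) : Prop := exists2 y : X, Y y & proj1_sig y = w.

Lemma M_mup w : M w -> w <w mup.
Proof. by case=> [[y hy]] _ <-. Qed.

Lemma Mcl_dec p x : (forall j, j < kf p -> M (x j)) -> M (gN (dec p) x).
Proof.
move=> hx.
have [v hv] := @choice 'I_(kf p) X (fun i y => Y y /\ proj1_sig y = x i)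
  (fun i => match hx i (ltn_ord i) with ex_intro2 y h1 h2 => ex_intro _ y (conj h1 h2) end).
exists (fX v); first by apply: Ycl => i; case: (hv i).
rewrite /fX /=; apply: gN_ext => j hj; rewrite /xv.
case: insubP => [i _ <-|]; first by case: (hv i).
by rewrite hj.
Qed.

Lemma Mcl k x : (forall j, j < arity k -> M (x j)) -> M (gN k x).
Proof.
have e' : dec (pickle k) = k by rewrite /dec pickleK.
move=> hx; have := @Mcl_dec (pickle k) x; rewrite /kf e'; exact.
Qed.

Lemma a0M : M a0.
Proof. by have := @Mcl (inl (0, 0, 0)) (fun _ => a0) (fun j hj => False_ind _ (notF hj)). Qed.

Lemma Mcard : M #= seg mup.
Proof.
pose pv := (fun s : X => proj1_sig s).
have vinj : forall B : set X, {in B &, injective pv}.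
  move=> B x y _ _; exact: sig_irr.
have -> : M = pv @` Y by apply/seteqP; split => w [y Yy <-]; exists y.
apply: card_eq_trans (inj_card_eq (vinj Y)) _.
apply: card_eq_trans Yc _.
have -> : seg mup = pv @` [set: X].
  apply/seteqP; split; last by move=> _ [[y hy] _ <-].
  by move=> w hw; exists (exist _ w hw).
exact: card_esym (inj_card_eq (vinj _)).
Qed.

Lemma Mcof g : g <w mup -> exists2 d, M d & g <=w d.
Proof.
move=> gm; apply: contrapT => hn.
have Ms : M `<=` seg g.
  move=> d Md; apply: wnle => hle; apply: hn; by exists d.
apply: mup_not_le.
apply: (@card_le_trans _ _ _ M); first by move: (card_esym Mcard); rewrite card_eq_le => /andP[].
apply: (@card_le_trans _ _ _ (seg g)); first exact: subset_card_le.
exact: small_seg.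
Qed.

Lemma JONS a : A a -> M a -> (forall y, y <w a -> exists2 c, M c /\ c <w a & y <=w c) ->
  seg a `<=` M.
Proof.
move=> Aa Ma cof.
pose Z := fun c => M c /\ c <w a.
suff : seg a `<=` Z by move=> hs c /hs [].
apply: Hff3 => //.
- by move=> c [].
- move=> n v Zv; split; last by apply: Hff2 => // i; case: (Zv i).
  pose x := fun j => if j is j'.+1 then (if insub j' is Some i then v i else a) else a.
  have := @Mcl (inl (4, n, kk a n)) x.
  have -> : gN (inl (4, n, kk a n)) x = ffW a n v.
    rewrite /gN /= /Jons /mask /=; case: pselect => // _.
    congr (ffW a n _); apply: funext => i /=; rewrite ltnS ltn_ord /x.
    by rewrite valK.
  apply; case=> [|j] /= hj; first exact: Ma.
  by rewrite /x; case: insubP => [i _ _|]; [case: (Zv i)|].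
- case: (HA Aa) => _ [_ hr]; apply: hr; first by move=> c [].
  exact: cof.
Qed.

Definition FM : set (W -> W) := [set psi x | x in M].

Lemma FMsub : FM `<=` F.
Proof. by move=> _ [x Mx <-]; apply: Hpsi1; apply: M_mup. Qed.

Lemma FMcard : FM #= seg mup.
Proof.
apply: card_eq_trans Mcard.
apply: inj_card_eq => x y; rewrite !inE => Mx My; apply: Hpsi2; exact: M_mup.
Qed.

Lemma betaM : seg beta `<=` M.
Proof.
case: (pselect (forall y, y <w a0 -> exists2 c, M c /\ c <w a0 & y <=w c)) => [cof|ncof].
  move=> i ib; apply: (JONS Ha0 a0M cof); exact: wlt_trans ib Ha0b.
exfalso.
have [sg [sa sM]] : exists s, s <w a0 /\ forall c, M c -> c <w a0 -> c <w s.
  apply: contrapT => hn; apply: ncof => y ya; apply: contrapT => hc; apply: hn.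
  exists y; split => // c Mc ca.
  apply: wnle => hle; apply: hc; by exists c.
have smu : sg <w mu := wlt_le_trans sa (A_le_mu Ha0).
have [a2 [Aa2 ub2] sa2] := HFspec FMsub FMcard smu.
pose T := fun y => y <w a2 /\ exists t (xs : nat -> W),
  (forall j, M (xs j)) /\ y = evT a2 (fun j => psi (xs j) a2) t.
have segT : seg a2 `<=` T.
  apply: Hff3 => //.
  - by move=> y [].
  - move=> n v Tv.
    have [tt htt] := @choice 'I_(kk a2 n) (GenTree.tree nat * (nat -> W))%type
      (fun i p => (forall j, M (p.2 j)) /\ v i = evT a2 (fun j => psi (p.2 j) a2) p.1)
      (fun i => match Tv i with conj _ (ex_intro t (ex_intro xs (conj h1 h2))) =>
                  ex_intro _ (t, xs) (conj h1 h2) end).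
    pose T_ := fun j => if insub j is Some i then (tt i).1 else GenTree.Leaf 0 : GenTree.tree nat.
    pose X_ := fun j => if insub j is Some i then (tt i).2 else (fun _ => a0) : nat -> W.
    pose xs' := fun m => if @unpickle (nat * nat)%type m is Some (j, l) then X_ j l else a0.
    pose ts := mkseq (fun j => ren (fun l => pickle (j, l)) (T_ j)) (kk a2 n).
    have xsM : forall m, M (xs' m).
      move=> m; rewrite /xs'; case: (unpickle m) => [[j l]|]; last exact: a0M.
      rewrite /X_; case: insubP => [i _ _|_]; [by case: (htt i) | exact: a0M].
    have ev_i : forall i : 'I_(kk a2 n),
        nth a2 (map (tev (opT a2) (fun j => psi (xs' j) a2)) ts) i = v i.
      move=> i; rewrite (nth_map (GenTree.Leaf 0)); last by rewrite size_mkseq.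
      rewrite nth_mkseq // tev_ren /T_ valK.
      case: (htt i) => _ ->; rewrite /evT; congr tev; apply: funext => l.
      by rewrite /xs' pickleK /X_ valK.
    split; first by apply: Hff2 => // i; case: (Tv i).
    exists (GenTree.Node n ts), xs'; split => //.
    rewrite /evT /= /opT; congr (ffW a2 n _); apply: funext => i; by rewrite ev_i.
  - case: (HA Aa2) => _ [_ hr]; apply: hr; first by move=> y [].
    move=> g ga; have [f FMf gf] := ub2 g ga.
    case: FMf gf => al Mal <- gf.
    exists (psi al a2) => //; split; first exact: in_prod_lt (Hpsi1 (M_mup Mal)) Aa2.
    by exists (GenTree.Leaf 0), (fun _ => al).
have [_ [t [xs [xsM sgE]]]] := segT _ sa2.
have := @Mcl (inr (t, vb t)) xs (fun j _ => xsM j).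
rewrite /gN /= /Hb.
case: pselect => [H|hn]; last first.
  by exfalso; apply: hn; apply: small.
case: (cid2 H) => y ya yP My.
have e1 : evT a2 (fun j => psi (mask (vb t) xs j) a2) t = sg.
  by rewrite sgE /evT; apply: tev_agree => j hj; rewrite /mask hj.
have := yP a2 Aa2; rewrite e1 => /(_ sa) s_y.
have y_s := sM y My ya.
exact: wlt_asym s_y y_s.
Qed.

Lemma AM a : A a -> M a.
Proof.
move=> Aa; have hM := betaM (Hh1 Aa).
have := @Mcl (inl (1, 0, 0)) (fun _ => h a) (fun _ _ => hM).
rewrite /gN /= /mask /= /Hinv; case: pselect => [H|hn]; last first.
  by exfalso; apply: hn; exists a.
by case: (cid2 H) => a' Aa' ha' /=; rewrite (h_inj Aa' Aa ha').
Qed.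

Lemma muM : seg mu `<=` M.
Proof.
move=> b bmu.
have [a [Aa uba] ba] := HFspec FMsub FMcard bmu.
apply: (JONS Aa (AM Aa)) => //.
move=> g ga; have [f FMf gf] := uba g ga.
case: FMf gf => al Mal <- gf.
have Mal' : al <w mup := M_mup Mal.
exists (psi al a) => //; split; last exact: in_prod_lt (Hpsi1 Mal') Aa.
have := @Mcl (inl (2, 0, 0)) (fun j => if j is 0 then al else a)
  (fun j hj => if j is 0 then Mal else AM Aa).
rewrite /gN /= /mask /= /Fval; case: pselect => // hn.
by exfalso; apply: hn.
Qed.

Lemma allM : seg mup `<=` M.
Proof.
move=> g gm; case: (wlt_total g mu) => [gmu|gmu]; first exact: muM.
have mug : mu <=w g by case: gmu => [->|hh]; [right|left].
have [d Md gd] := Mcof gm.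
case: gd => [gd|->] //.
have dm := M_mup Md.
have mud : mu <=w d := wle_trans mug (or_introl gd).
have [x xmu ex] := He2 mud dm gd.
have := @Mcl (inl (3, 0, 0)) (fun j => if j is 0 then d else x)
  (fun j hj => if j is 0 then Md else muM xmu).
rewrite /gN /= /mask /= /Ev; case: pselect => [_|hn]; first by rewrite ex.
by exfalso; apply: hn.
Qed.

Lemma Yfull : Y = [set: X].
Proof.
apply/seteqP; split => // y _.
have [y' Yy' e'] := allM (proj2_sig y).
by have <- : y' = y by apply: sig_irr.
Qed.

End Closure.

Lemma alg_jonsson : @jonsson_algebra X kf fX.
Proof. move=> Y Ycl Yc; exact: Yfull. Qed.

Lemma main_carries : carries_jonsson mup.
Proof. exists kf, fX; exact: alg_jonsson. Qed.

End Main.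

Theorem theorem5p10 (W : WellOrder) (A : set W) (mu mup : W) :
  (forall a, A a -> is_regular a) ->
  is_sup A mu ->
  ot_lt A mu ->
  (forall a, A a -> carries_jonsson a) ->
  is_succ_card mu mup ->
  in_spec_star A mup ->
  carries_jonsson mup.
Proof.
move=> HA Hsup Hot HJ Hsucc Hspec.
case: Hot => beta Hbeta [h [Hh1 [Hh2 Hh3]]].
case: Hspec => _ [F [HFprod [HFc HFs]]].
have HFspec : forall F0 : set (W -> W), F0 `<=` F -> F0 #= seg mup ->
    forall b, wlt b mu -> exists2 a, ub A F0 a & wlt b a.
  by move=> F0 s c b hb; apply: (HFs F0 s c mu Hsup b hb).
have [psi [Hpsi1 [Hpsi2 _]]] := card_eq_fn (fun x : W => x) (card_esym HFc).
have [e He] := @choice W (W -> W) (fun g eg => wle mu g -> wlt g mup ->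
    (forall x, wlt x mu -> wlt (eg x) g) /\ (forall y, wlt y g -> exists2 x, wlt x mu & eg x = y))
  (fun g => match pselect (wle mu g /\ wlt g mup) with
   | left (conj h1 h2) =>
       match card_eq_fn mu (card_esym (seg_card Hsucc h1 h2)) with
       | ex_intro eg (conj e1 (conj _ e3)) => ex_intro _ eg (fun _ _ => conj e1 e3) end
   | right hn => ex_intro _ id (fun h1 h2 => False_ind _ (hn (conj h1 h2))) end).
have [a0 Ha0 Ha0b] : exists2 a0, A a0 & wlt beta a0.
  apply: contrapT => hn; case: Hsup => _ hs.
  have hmb := hs beta (fun a Aa => wnlt (fun hb => hn (ex_intro2 _ _ a Aa hb))).
  exact: wle_nlt hmb Hbeta.
pose JP := fun a (p : {k : nat -> nat & forall n, ('I_(k n) -> W) -> W}) =>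
  A a -> (forall n v, wle (projT2 p n v) a) /\
     (forall n v, (forall i, wlt (v i) a) -> wlt (projT2 p n v) a) /\
     (forall Z : set W, Z `<=` seg a -> (forall n v, (forall i, Z (v i)) -> Z (projT2 p n v)) ->
       Z #= seg a -> seg a `<=` Z).
have JPex : forall a, exists p, JP a p.
  move=> a; case: (pselect (A a)) => [Aa|nA].
    have [k [f P]] := jonsson_W (HJ a Aa).
    by exists (existT _ k f).
  by exists (existT (fun k : nat -> nat => forall n, ('I_(k n) -> W) -> W) (fun _ => 0) (fun _ _ => a)).
have [jd Hjd] := @choice _ _ JP JPex.
apply: (@main_carries W A mu mup beta h F psi e a0 (fun a => projT1 (jd a)) (fun a => projT2 (jd a))).
all: try eassumption.
- by move=> g h1 h2; case: (He g h1 h2).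
- by move=> g h1 h2; case: (He g h1 h2).
- by move=> a n v Aa; case: (Hjd a Aa).
- by move=> a n v Aa; case: (Hjd a Aa) => _ [H _]; apply: H.
- by move=> a Aa; case: (Hjd a Aa) => _ [_ H]; apply: H.
Qed.
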